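(* Let $m\ge 2$ and let $e_1=(1,0)$, $e_2=(0,1)$ be the standard generating set of $\mathbb{Z}\times\mathbb{Z}_m$. Then the Cayley digraph $\mathrm{Cay}(\mathbb{Z}\times\mathbb{Z}_m;e_1,e_2)$ has a two-way infinite hamiltonian path, and it is unique up to translations.
   Context: The Cayley digraph $\mathrm{Cay}(G;a,b)$ has vertex set $G$ and an arc from $v$ to $v+s$ for all $v\in G$, $s\in\{a,b\}$. A two-way infinite hamiltonian path is a doubly-infinite sequence $\ldots,v_{-1},v_0,v_1,\ldots$ listing every vertex exactly once with an arc from $v_i$ to $v_{i+1}$ for all $i\in\mathbb{Z}$. A translate of a path by $g\in G$ is obtained by adding $g$ to every vertex. *)

(* Defs.v *)
From mathcomp Require Import all_boot all_order all_algebra.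
Set Implicit Arguments. Unset Strict Implicit. Unset Printing Implicit Defensive.
Import GRing.Theory.
Local Open Scope ring_scope.

Definition cay_arc (G : zmodType) (a b : G) (u v : G) : Prop :=
  v = u + a \/ v = u + b.

Definition two_way_ham_path (G : zmodType) (a b : G) (p : int -> G) : Prop :=
  bijective p /\ forall i : int, cay_arc a b (p i) (p (i + 1)).

(* Two paths are the same up to translation: q is the translate of p by
   some g in G (up to the irrelevant choice of index origin). *)
Definition translate_equiv (G : zmodType) (p q : int -> G) : Prop :=
  exists (k : int) (g : G), forall i : int, q i = p (i + k) + g.

Definition ZZm (m : nat) : zmodType := (int * 'Z_m)%type.
Definition e1 (m : nat) : ZZm m := (1%:Z, 0).
Definition e2 (m : nat) : ZZm m := (0%:Z, 1).

(* Main.v *)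
Require Import Defs.
From mathcomp Require Import all_boot all_order all_algebra zify ring lra.
From Stdlib Require Import Classical.
Set Implicit Arguments. Unset Strict Implicit. Unset Printing Implicit Defensive.
Import GRing.Theory Num.Theory.
Local Open Scope ring_scope.

Lemma int_ind2 (P : int -> Prop) : P 0 -> (forall n, P n <-> P (n + 1)) ->
  forall n, P n.
Proof.
move=> P0 HS [k|k].
  elim: k => [|k IH]; first exact: P0.
  have -> : Posz k.+1 = Posz k + 1 by lia.
  exact: (proj1 (HS _) IH).
elim: k => [|k IH].
  by apply: (proj2 (HS _)); have -> : Negz 0 + 1 = 0 by [].
apply: (proj2 (HS _)); have -> : Negz k.+1 + 1 = Negz k by rewrite !NegzE; lia.
by [].
Qed.

Lemma pairE (A B : Type) (x : A * B) : x = (x.1, x.2).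
Proof. by case: x. Qed.

Lemma ZZm_eq m (v w : ZZm m) : v.1 = w.1 -> v.2 = w.2 -> v = w.
Proof. by case: v; case: w => /= a b c d -> ->. Qed.

Definition dd m : ZZm m := e2 m - e1 m.
Definition cls m (v : ZZm m) : 'Z_m := (v.1)%:~R + v.2.

Lemma cls_e1 m (v : ZZm m) : cls (v + e1 m) = cls v + 1.
Proof. rewrite /cls /= intrD addr0; ring. Qed.
Lemma cls_e2 m (v : ZZm m) : cls (v + e2 m) = cls v + 1.
Proof. rewrite /cls /= addr0; ring. Qed.
Lemma cls_dd m (v : ZZm m) : cls (v + dd m) = cls v.
Proof. rewrite /cls /= !(intrD, intrB, intrN); ring. Qed.
Lemma cls_ddN m (v : ZZm m) : cls (v - dd m) = cls v.
Proof. rewrite /cls /= !(intrD, intrB, intrN); ring. Qed.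

Lemma e1_neq_e2 m : e1 m <> e2 m.
Proof. by move=> /(congr1 fst). Qed.

Lemma dd_neq0 m : dd m <> 0.
Proof. by move=> /(congr1 fst). Qed.

Definition sv m (p : int -> ZZm m) (g : ZZm m -> int) (v : ZZm m) := p (g v + 1) - v.

Lemma svE m p g (v : ZZm m) : p (g v + 1) = v + sv p g v.
Proof. by rewrite /sv subrKC. Qed.

Lemma sv_cases m (p : int -> ZZm m) g (hgp : cancel g p)
  (harc : forall i, cay_arc (e1 m) (e2 m) (p i) (p (i + 1))) v :
  sv p g v = e1 m \/ sv p g v = e2 m.
Proof.
rewrite /sv; case: (harc (g v)); rewrite hgp => ->; rewrite addrC addKr; by [left|right].
Qed.

Lemma sv_dd m (p : int -> ZZm m) g (hpg : cancel p g) (hgp : cancel g p)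
  (harc : forall i, cay_arc (e1 m) (e2 m) (p i) (p (i + 1))) v :
  sv p g (v + dd m) = sv p g v.
Proof.
have pinj := can_inj hpg.
case: (sv_cases hgp harc v) => Hv; case: (sv_cases hgp harc (v + dd m)) => Hw;
  try by rewrite Hv Hw.
- (* v: e1, v+dd : e2 *)
  exfalso.
  set j := g (v + e2 m).
  have pj : p j = v + e2 m by rewrite /j hgp.
  case: (harc (j - 1)); rewrite subrK pj => H.
  + have E : p (j - 1) = v + dd m.
      by rewrite /dd addrA H addrK.
    have Gj : g (v + dd m) = j - 1 by rewrite -E hpg.
    move: Hw; rewrite /sv Gj subrK pj.
    have -> : v + e2 m - (v + dd m) = e1 m.
      by apply: ZZm_eq; rewrite /dd /e1 /e2 /=; ring.
    exact: e1_neq_e2.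
  + have E : p (j - 1) = v by apply: (addIr (e2 m)); rewrite -H.
    have Gj : g v = j - 1 by rewrite -E hpg.
    move: Hv; rewrite /sv Gj subrK pj.
    have -> : v + e2 m - v = e2 m by apply: ZZm_eq => /=; ring.
    move=> /esym; exact: e1_neq_e2.
- (* v: e2, v+dd : e1 *)
  exfalso.
  have := svE p g (v + dd m); rewrite Hw.
  have := svE p g v; rewrite Hv => E1 E2.
  have : p (g (v + dd m) + 1) = p (g v + 1) by rewrite E1 E2 /dd -addrA subrK.
  move/pinj/addIr => /(congr1 p); rewrite !hgp => /eqP; rewrite -subr_eq0 addrC addKr.
  by move/eqP; apply: dd_neq0.
Qed.

Lemma sv_cls m (p : int -> ZZm m) g (hpg : cancel p g) (hgp : cancel g p)
  (harc : forall i, cay_arc (e1 m) (e2 m) (p i) (p (i + 1))) v w :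
  cls v = cls w -> sv p g v = sv p g w.
Proof.
suff H : forall n, forall v w : ZZm m, cls v = cls w -> w.1 - v.1 = n ->
   sv p g v = sv p g w by move=> E; exact: (H _ v w E erefl).
apply: int_ind2.
  move=> v' w' E D.
  have E1 : v'.1 = w'.1 by lia.
  have E2 : v'.2 = w'.2 by move: E; rewrite /cls E1 => /addrI.
  by rewrite (ZZm_eq E1 E2).
move=> n; split=> IH v' w' E D.
- have -> : sv p g v' = sv p g (v' - dd m) by rewrite -(sv_dd hpg hgp harc (v' - dd m)) subrK.
  apply: IH; first by rewrite cls_ddN.
  have H : w'.1 - (v'.1 + 1) = n by lia.
  exact: H.
- rewrite -(sv_dd hpg hgp harc v').
  apply: IH; first by rewrite cls_dd.
  have H : w'.1 - (v'.1 - 1) = n + 1 by lia.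
  exact: H.
Qed.

Definition step m (p : int -> ZZm m) (i : int) := p (i + 1) - p i.

Lemma pS m (p : int -> ZZm m) i : p (i + 1) = p i + step p i.
Proof. by rewrite /step subrKC. Qed.

Lemma step_cases m (p : int -> ZZm m) (H : two_way_ham_path (e1 m) (e2 m) p) i :
  step p i = e1 m \/ step p i = e2 m.
Proof.
case: H => _ harc; rewrite /step; case: (harc i) => ->; rewrite addrC addKr; by [left|right].
Qed.

Lemma cls_S m (p : int -> ZZm m) (H : two_way_ham_path (e1 m) (e2 m) p) i :
  cls (p (i + 1)) = cls (p i) + 1.
Proof. by rewrite pS; case: (step_cases H i) => ->; rewrite ?cls_e1 ?cls_e2. Qed.

Lemma cls_nat m (p : int -> ZZm m) (H : two_way_ham_path (e1 m) (e2 m) p) i (n : nat) :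
  cls (p (i + n%:Z)) = cls (p i) + n%:R.
Proof.
elim: n => [|n IH]; first by rewrite addr0 addr0.
have -> : (n.+1)%:Z = n%:Z + 1 :> int by rewrite -addn1 PoszD.
by rewrite addrA (cls_S H) IH mulrSr addrA.
Qed.

Lemma cls_per m (p : int -> ZZm m) (hm : (1 < m)%N) (H : two_way_ham_path (e1 m) (e2 m) p) i :
  cls (p (i + m%:Z)) = cls (p i).
Proof. by rewrite cls_nat // pchar_Zp // addr0. Qed.

Lemma step_per m (p : int -> ZZm m) (hm : (1 < m)%N) (H : two_way_ham_path (e1 m) (e2 m) p) i :
  step p (i + m%:Z) = step p i.
Proof.
have H' := H; case: H' => [[g hpg hgp] harc].
have E : forall j, step p j = sv p g (p j) by move=> j; rewrite /sv /step hpg.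
rewrite !E; apply: (sv_cls hpg hgp harc); exact: cls_per.
Qed.

Lemma step_perT m (p : int -> ZZm m) (hm : (1 < m)%N) (H : two_way_ham_path (e1 m) (e2 m) p) t i :
  step p (i + t * m%:Z) = step p i.
Proof.
move: t i; apply: int_ind2; first by move=> i; rewrite mul0r addr0.
move=> t; split=> IH i.
- by rewrite mulrDl mul1r addrA step_per.
- by rewrite -(IH i) mulrDl mul1r addrA step_per.
Qed.

Lemma cls_perT m (p : int -> ZZm m) (hm : (1 < m)%N) (H : two_way_ham_path (e1 m) (e2 m) p) t i :
  cls (p (i + t * m%:Z)) = cls (p i).
Proof.
move: t i; apply: int_ind2; first by move=> i; rewrite mul0r addr0.
move=> t; split=> IH i.
- by rewrite mulrDl mul1r addrA cls_per.
- by rewrite -(IH i) mulrDl mul1r addrA cls_per.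
Qed.

Definition X m (p : int -> ZZm m) (i : int) : int := (p i).1.
Definition SX m (p : int -> ZZm m) (i : int) : int := (step p i).1.

Lemma XS m (p : int -> ZZm m) (i : int) : X p (i + 1) = X p i + SX p i.
Proof. by rewrite /X /SX {1}pS. Qed.

Lemma SX_cases m (p : int -> ZZm m) (H : two_way_ham_path (e1 m) (e2 m) p) (i : int) :
  (SX p i = 1 /\ step p i = e1 m) \/ (SX p i = 0 /\ step p i = e2 m).
Proof. by rewrite /SX; case: (step_cases H i) => ->; [left|right]. Qed.

Lemma SX_per m (p : int -> ZZm m) (hm : (1 < m)%N) (H : two_way_ham_path (e1 m) (e2 m) p) (i : int) :
  SX p (i + m%:Z) = SX p i.
Proof. by rewrite /SX step_per. Qed.

Lemma Xmono m (p : int -> ZZm m) (H : two_way_ham_path (e1 m) (e2 m) p) (i : int) (n : nat) :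
  X p i <= X p (i + n%:Z).
Proof.
elim: n => [|n IH]; first by rewrite addr0.
have -> : i + (n.+1)%:Z = (i + n%:Z) + 1 :> int by rewrite -addn1 PoszD addrA.
rewrite XS; case: (SX_cases H (i + n%:Z)) => [[-> _]|[-> _]]; lia.
Qed.

Lemma XP m (p : int -> ZZm m) (hm : (1 < m)%N) (H : two_way_ham_path (e1 m) (e2 m) p) (i : int) :
  X p (i + m%:Z) = X p i + (X p m%:Z - X p 0).
Proof.
move: i; apply: int_ind2; first by rewrite add0r; lia.
move=> i; have E1 := XS p i; have E2 := XS p (i + m%:Z).
rewrite SX_per // in E2.
have -> : i + 1 + m%:Z = i + m%:Z + 1 by rewrite addrAC.
rewrite E1 E2; lia.
Qed.

Lemma XT m (p : int -> ZZm m) (hm : (1 < m)%N) (H : two_way_ham_path (e1 m) (e2 m) p) (t : int) :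
  X p (t * m%:Z) = X p 0 + t * (X p m%:Z - X p 0).
Proof.
move: t; apply: int_ind2; first by rewrite !mul0r addr0.
move=> t; have := XP hm H (t * m%:Z).
rewrite (_ : t * m%:Z + m%:Z = (t + 1) * m%:Z); last by rewrite mulrDl mul1r.
move=> ->. lia.
Qed.

Lemma Zp_nat0 m (hm : (1 < m)%N) (n : nat) : (n < m)%N -> (n%:R : 'Z_m) = 0 -> n = 0%N.
Proof.
move=> nm E; have := val_Zp_nat hm n; rewrite E /= modn_small //.
Qed.

Lemma c_one m (p : int -> ZZm m) (hm : (1 < m)%N) (H : two_way_ham_path (e1 m) (e2 m) p) :
  X p m%:Z - X p 0 = 1.
Proof.
have H' := H; case: H' => [[g hpg hgp] harc].
set j := g (p 0 - dd m).
have pj : p j = p 0 - dd m by rewrite /j hgp.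
have Xj : X p j = X p 0 + 1 by rewrite /X pj /dd /=; ring.
have Cj : cls (p j) = cls (p 0) by rewrite pj cls_ddN.
have mpos : (0 < m%:Z) by lia.
have mn0 : (m%:Z != 0) by lia.
have Ej := divz_eq j m%:Z.
move: (j %/ m%:Z)%Z (j %% m%:Z)%Z (modz_ge0 j mn0) (ltz_pmod j mpos) Ej => t r r0 rm Ej.
have [rn Er] : exists rn : nat, r = rn%:Z by case: r r0 rm Ej => [rn|//] *; exists rn.
subst r.
have rnm : (rn < m)%N by lia.
have : cls (p j) = cls (p 0) + rn%:R.
  by rewrite Ej (cls_nat H) -[t * m%:Z]add0r (cls_perT hm H).
rewrite Cj => E0.
have : (rn%:R : 'Z_m) = 0 by apply: (addrI (cls (p 0))); rewrite addr0 -E0.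
move=> /(Zp_nat0 hm rnm) rn0.
subst rn.
have Ej' : j = t * m%:Z by rewrite Ej addr0.
have := XT hm H t; rewrite -Ej' Xj.
have := Xmono H 0 m; rewrite add0r.
move: (X p m%:Z) (X p 0) => a b ab E.
have E' : t * (a - b) = 1 by lia.
have [tle|tgt] := lerP t 0; nia.
Qed.

Lemma X_const m (p : int -> ZZm m) (H : forall i, SX p i = 0) (i : int) (n : nat) :
  X p (i + n%:Z) = X p i.
Proof.
elim: n => [|n IH]; first by rewrite addr0.
have -> : i + (n.+1)%:Z = (i + n%:Z) + 1 :> int by rewrite -addn1 PoszD addrA.
by rewrite XS H addr0.
Qed.

Lemma structure m (p : int -> ZZm m) (hm : (1 < m)%N) (H : two_way_ham_path (e1 m) (e2 m) p) :
  exists a, step p a = e1 m /\ forall r : int, 0 < r < m%:Z -> step p (a + r) = e2 m.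
Proof.
case: (classic (exists a, SX p a = 1)) => [[a Ha]|Hn]; last first.
  exfalso.
  have H0 : forall i, SX p i = 0.
    move=> i; case: (SX_cases H i) => [[E _]|[E _]] //; case: Hn; by exists i.
  have := c_one hm H; have := X_const H0 0 m; rewrite add0r => ->; lia.
exists a; split.
  by case: (SX_cases H a) => [[_ ->]|[E _]] //; move: Ha; rewrite E.
move=> r /andP [r0 rm].
have [k Er] : exists k : nat, r = (k.+1)%:Z.
  by case: r r0 rm => [[|k]|//] // *; exists k.
subst r.
have c1 := c_one hm H.
have Xm := XP hm H a.
have X1 := XS p a.
have M1 := Xmono H (a + 1) k.
have M2 := Xmono H (a + (k.+1)%:Z + 1) (m - k.+2).
have XS2 := XS p (a + (k.+1)%:Z).
have E1 : a + 1 + k%:Z = a + (k.+1)%:Z by lia.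
have E2 : a + (k.+1)%:Z + 1 + (m - k.+2)%:Z = a + m%:Z by lia.
rewrite E1 in M1; rewrite E2 in M2.
case: (SX_cases H (a + (k.+1)%:Z)) => [[E _]|[_ //]].
exfalso; move: M1 M2 XS2 Xm X1 c1; rewrite E Ha.
move: (X p (a + (k.+1)%:Z)) (X p (a + (k.+1)%:Z + 1)) (X p (a + m%:Z)) (X p (a + 1)) (X p a) (X p m%:Z) (X p 0).
move=> *; lia.
Qed.

Lemma uniqueness m (p q : int -> ZZm m) (hm : (1 < m)%N)
  (Hp : two_way_ham_path (e1 m) (e2 m) p) (Hq : two_way_ham_path (e1 m) (e2 m) q) :
  translate_equiv p q.
Proof.
have [ap [Hap1 Hap2]] := structure hm Hp.
have [aq [Haq1 Haq2]] := structure hm Hq.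
set k := ap - aq.
have S : forall i, step q i = step p (i + k).
  move=> i.
  have mpos : (0 < m%:Z) by lia.
  have mn0 : (m%:Z != 0) by lia.
  have Ej := divz_eq (i - aq) m%:Z.
  move: ((i - aq) %/ m%:Z)%Z ((i - aq) %% m%:Z)%Z (modz_ge0 (i - aq) mn0) (ltz_pmod (i - aq) mpos) Ej => t r r0 rm Ej.
  have -> : i = (aq + r) + t * m%:Z by lia.
  have -> : aq + r + t * m%:Z + k = (ap + r) + t * m%:Z by rewrite /k; lia.
  rewrite (step_perT hm Hq) (step_perT hm Hp).
  have [->|rpos] := eqVneq r 0.
    by rewrite !addr0 Hap1 Haq1.
  rewrite Hap2 ?Haq2 //; apply/andP; split => //; lia.
exists k, (q 0 - p k).
apply: int_ind2; first by rewrite add0r subrKC.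
move=> i; rewrite (pS q i) (_ : i + 1 + k = i + k + 1); last by rewrite addrAC.
rewrite (pS p (i + k)) -S; split => [->|E]; first by rewrite addrAC.
apply: (addIr (step q i)); rewrite E; by rewrite addrAC.
Qed.

Lemma Zp_int0 m (hm : (1 < m)%N) (z : int) :
  (z%:~R : 'Z_m) = 0 -> - m%:Z < z < m%:Z -> z = 0.
Proof.
case: z => [n|n] E /andP [h1 h2].
  by rewrite (Zp_nat0 hm _ E) //; lia.
exfalso; move: E; rewrite NegzE intrN => /eqP; rewrite oppr_eq0 => /eqP E.
have nm : (n.+1 < m)%N by move: h1; rewrite NegzE; lia.
by have := Zp_nat0 hm nm E.
Qed.

Lemma intr_m m (hm : (1 < m)%N) (t : int) : ((t * m%:Z)%:~R : 'Z_m) = 0.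
Proof. by rewrite intrM (_ : (m%:Z)%:~R = m%:R :> 'Z_m) // pchar_Zp // mulr0. Qed.

Definition P0 m (n : int) : ZZm m := ((n %/ m%:Z)%Z, (n - (n %/ m%:Z)%Z)%:~R).
Definition G0 m (v : ZZm m) : int := v.1 * m%:Z + (((val v.2)%:Z + v.1) %% m%:Z)%Z.

Lemma divz_uniq (n t r d : int) : 0 < d -> n = t * d + r -> 0 <= r < d -> (n %/ d)%Z = t.
Proof.
move=> dpos E /andP [r0 rd].
have dn0 : d != 0 by lia.
have Ej := divz_eq n d.
move: (n %/ d)%Z (n %% d)%Z (modz_ge0 n dn0) (ltz_pmod n dpos) Ej => t' r' r0' rd' Ej.
have [tle|tgt] := lerP t t'; nia.
Qed.

Lemma P0G0 m (hm : (1 < m)%N) v : P0 m (G0 v) = v.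
Proof.
case: v => x y; rewrite /P0 /G0 /=.
have mpos : (0 < m%:Z) by lia.
have mn0 : (m%:Z != 0) by lia.
have D : ((x * m%:Z + (((val y)%:Z + x) %% m%:Z)%Z) %/ m%:Z)%Z = x.
  apply: (@divz_uniq _ x (((val y)%:Z + x) %% m%:Z)%Z _ mpos erefl).
  by rewrite modz_ge0 // ltz_pmod.
rewrite D; congr pair.
have Ej := divz_eq ((val y)%:Z + x) m%:Z.
set r := (((val y)%:Z + x) %% m%:Z)%Z in Ej *.
set t := (((val y)%:Z + x) %/ m%:Z)%Z in Ej.
have -> : x * m%:Z + r - x = (x - t) * m%:Z + (val y)%:Z by lia.
rewrite intrD intr_m // add0r /=.
exact: natr_Zp.
Qed.

Lemma P0_inj m (hm : (1 < m)%N) : injective (P0 m).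
Proof.
move=> n1 n2 /= [E1 E2].
have mpos : (0 < m%:Z) by lia.
have mn0 : (m%:Z != 0) by lia.
have D1 := divz_eq n1 m%:Z; have D2 := divz_eq n2 m%:Z.
have b1 := modz_ge0 n1 mn0; have b2 := modz_ge0 n2 mn0.
have c1 := ltz_pmod n1 mpos; have c2 := ltz_pmod n2 mpos.
rewrite -E1 in E2.
have : ((n1 - n2)%:~R : 'Z_m) = 0.
  have -> : n1 - n2 = (n1 - (n1 %/ m%:Z)%Z) - (n2 - (n1 %/ m%:Z)%Z) by ring.
  by rewrite intrB E2 subrr.
move/(Zp_int0 hm) => H.
apply/eqP; rewrite -subr_eq0; apply/eqP; apply: H.
move: (n1 %/ m%:Z)%Z (n2 %/ m%:Z)%Z E1 (n1 %% m%:Z)%Z (n2 %% m%:Z)%Z b1 b2 c1 c2 D1 D2 => q1 q2 -> r1 r2 *.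
apply/andP; split; nia.
Qed.

Lemma existence m (hm : (1 < m)%N) : exists p : int -> ZZm m, two_way_ham_path (e1 m) (e2 m) p.
Proof.
exists (P0 m); split.
  exists (@G0 m); last exact: P0G0.
  move=> n; apply: (P0_inj hm); exact: P0G0.
move=> n; rewrite /cay_arc /P0.
have mpos : (0 < m%:Z) by lia.
have mn0 : (m%:Z != 0) by lia.
have D1 := divz_eq n m%:Z; have D2 := divz_eq (n + 1) m%:Z.
have b1 := modz_ge0 n mn0; have b2 := modz_ge0 (n + 1) mn0.
have c1 := ltz_pmod n mpos; have c2 := ltz_pmod (n + 1) mpos.
move: (n %/ m%:Z)%Z ((n + 1) %/ m%:Z)%Z (n %% m%:Z)%Z ((n + 1) %% m%:Z)%Z b1 b2 c1 c2 D1 D2 => q1 q2 r1 r2 *.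
have [E|E] : q2 = q1 \/ q2 = q1 + 1.
  have [le|gt] := lerP q2 q1; [left|right]; nia.
- right; rewrite E; apply: ZZm_eq => /=; rewrite ?addr0 // !intrD !intrN; ring.
- left; rewrite E; apply: ZZm_eq => /=; rewrite ?addr0 // !intrD !intrN; ring.
Qed.

Theorem mainTheorem15 (m : nat) : (2 <= m)%N ->
  (exists p : int -> ZZm m, two_way_ham_path (e1 m) (e2 m) p) /\
  (forall p q : int -> ZZm m,
      two_way_ham_path (e1 m) (e2 m) p ->
      two_way_ham_path (e1 m) (e2 m) q ->
      translate_equiv p q).
Proof.
move=> hm; split; first exact: existence.
by move=> p q Hp Hq; apply: uniqueness.
Qed.
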